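(* Consider multiclass data $(x,y)$ with $x\in\mathcal{X}\subseteq\mathbb{R}^d$ drawn from a fixed distribution and labels $y\in\{1,\dots,k\}$, where $k\ge2$. A binary decision tree is grown top-down from a single root leaf. At each step $t=1,2,\dots$, the leaf $m$ of largest weight is split into two children using a hypothesis $h_m:\mathcal{X}\to\{-1,1\}$: $h_m(x)=1$ sends $x$ to the right child and $h_m(x)=-1$ sends it to the left child. After $t$ steps the tree has $t$ internal nodes. Assume the Weak Hypothesis Assumption holds with parameter $\gamma$: there is $\gamma>0$ such that for every split node $m$, \[ \gamma\le\min(\beta_m,1-\beta_m)\quad\text{and}\quad \tfrac12 J(h_m)=\sum_{i=1}^k\pi_{m,i}\,|P_{m,i}-\beta_m|\ge\gamma . \] Then for any $\alpha\in[0,2(1-\frac1k)]$, the Gini-entropy after $t$ splits satisfies $G_t^g\le\alpha$ whenever \[ t\ \ge\ \left(\frac{2(1-\frac1k)}{\alpha}\right)^{\frac{2(1-\gamma)^2}{\gamma^2\log_2 e}(k-1)}. \]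
   Context: For a node $m$, $w_m$ is the probability that $x$ reaches $m$. $\pi_{m,i}$ is the probability that $x$ has label $i$ given that it reaches $m$. $\beta_m=P(h_m(x)>0)$ and $P_{m,i}=P(h_m(x)>0\mid i)$, both computed for $x$ conditioned on reaching $m$ (the latter also conditioned on label $i$). Thus \[ J(h_m)=2\sum_i\pi_{m,i}\,|\beta_m-P_{m,i}|. \] For the tree after $t$ splits with leaf set $\mathcal{L}$, \[ G_t^g=\sum_{l\in\mathcal{L}}w_l\sum_{i=1}^k\pi_{l,i}(1-\pi_{l,i}). \] *)

(* Defs.v *)
From HB Require Import structures.
From mathcomp Require Import all_boot all_order all_algebra.
From mathcomp Require Import all_classical all_reals all_analysis.
Set Implicit Arguments. Unset Strict Implicit. Unset Printing Implicit Defensive.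
Import Order.TTheory GRing.Theory Num.Theory.
Local Open Scope classical_set_scope.
Local Open Scope ring_scope.

Section TreeDefs.
Context {R : realType} {d : measure_display} {T : measurableType d}
  (P : probability T R) {dim k : nat} (X : T -> 'rV[R]_dim) (Y : T -> 'I_k).

(* a node/leaf is the set of inputs x that reach it *)
Definition wt (m : set 'rV[R]_dim) : R := fine (P (X @^-1` m)).

Definition wlab (m : set 'rV[R]_dim) (i : 'I_k) : R :=
  fine (P (X @^-1` m `&` Y @^-1` [set i])).

Definition pi_ (m : set 'rV[R]_dim) (i : 'I_k) : R := wlab m i / wt m.

Definition beta_ (h : 'rV[R]_dim -> R) (m : set 'rV[R]_dim) : R :=
  fine (P (X @^-1` (m `&` [set x | 0 < h x]))) / wt m.

Definition Pmi (h : 'rV[R]_dim -> R) (m : set 'rV[R]_dim) (i : 'I_k) : R :=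
  fine (P (X @^-1` (m `&` [set x | 0 < h x]) `&` Y @^-1` [set i])) / wlab m i.

Definition Jh (h : 'rV[R]_dim -> R) (m : set 'rV[R]_dim) : R :=
  2 * \sum_(i < k) pi_ m i * `|beta_ h m - Pmi h m i|.

Definition WHA (gamma : R) (h : 'rV[R]_dim -> R) (m : set 'rV[R]_dim) : Prop :=
  gamma <= Num.min (beta_ h m) (1 - beta_ h m) /\
  gamma <= \sum_(i < k) pi_ m i * `|Pmi h m i - beta_ h m|.

Definition gini (leaves : seq (set 'rV[R]_dim)) : R :=
  \sum_(l <- leaves) wt l * \sum_(i < k) pi_ l i * (1 - pi_ l i).

End TreeDefs.

Definition split_leaf {R : realType} {dim : nat} (h : 'rV[R]_dim -> R)
  (m : set 'rV[R]_dim) : seq (set 'rV[R]_dim) :=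
  [:: m `&` [set x | h x < 0]; m `&` [set x | 0 < h x]].

Fixpoint leaves {R : realType} {dim : nat} (hs : nat -> 'rV[R]_dim -> R)
  (js : nat -> nat) (t : nat) : seq (set 'rV[R]_dim) :=
  match t with
  | 0 => [:: setT]
  | s.+1 => let L := leaves hs js s in
            let j := js s in
            take j L ++ split_leaf (hs s) (nth set0 L j) ++ drop j.+1 L
  end.

(* Main.v *)
Require Import Defs.
From HB Require Import structures.
From mathcomp Require Import all_boot all_order all_algebra.
From mathcomp Require Import all_classical all_reals all_analysis.
From mathcomp Require Import ring lra zify.
Import Order.TTheory GRing.Theory Num.Theory.
Local Open Scope classical_set_scope.
Local Open Scope ring_scope.
Set Implicit Arguments. Unset Strict Implicit.

Lemma fineP_add (R : realType) (d : measure_display) (T : measurableType d)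
  (P : probability T R) (A B : set T) :
  measurable A -> measurable B -> A `&` B = set0 ->
  fine (P (A `|` B)) = fine (P A) + fine (P B).
Proof.
move=> mA mB AB; rewrite measureU // fineD //; exact: fin_num_measure.
Qed.

Lemma fineP_ge0 (R : realType) (d : measure_display) (T : measurableType d)
  (P : probability T R) (A : set T) : 0 <= fine (P A).
Proof. exact: fine_ge0. Qed.

Lemma split_pre (R : realType) (dim : nat) (T : Type) (X : T -> 'rV[R]_dim)
  (h : 'rV[R]_dim -> R) (m : set 'rV[R]_dim) (S : set T) :
  (forall x, h x = 1 \/ h x = -1) ->
  X @^-1` m `&` S = (X @^-1` (m `&` [set x | h x < 0]) `&` S) `|`
                    (X @^-1` (m `&` [set x | 0 < h x]) `&` S).
Proof.
move=> hpm; apply/seteqP; split => t /=.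
  move=> [mt St]; case: (hpm (X t)) => E; [right|left]; rewrite /= E;
  by split => //; split => //; rewrite ?ltr01 ?ltrN10.
by case=> [[[? _] ?]|[[? _] ?]].
Qed.

Lemma split_disj (R : realType) (dim : nat) (T : Type) (X : T -> 'rV[R]_dim)
  (h : 'rV[R]_dim -> R) (m : set 'rV[R]_dim) (S : set T) :
  (X @^-1` (m `&` [set x | h x < 0]) `&` S) `&`
                    (X @^-1` (m `&` [set x | 0 < h x]) `&` S) = set0.
Proof.
apply/seteqP; split => t //= [[[_ a] _] [[_ b] _]].
by move: (lt_trans a b); rewrite ltxx.
Qed.

Lemma wt_split (R : realType) (d : measure_display) (T : measurableType d)
  (P : probability T R) (dim : nat) (X : T -> 'rV[R]_dim)
  (h : 'rV[R]_dim -> R) (m : set 'rV[R]_dim) :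
  measurable (X @^-1` m) -> measurable (X @^-1` [set x | 0 < h x]) ->
  measurable (X @^-1` [set x | h x < 0]) ->
  (forall x, h x = 1 \/ h x = -1) ->
  wt P X m = wt P X (m `&` [set x | h x < 0]) + wt P X (m `&` [set x | 0 < h x]).
Proof.
move=> mm mp mn hpm; rewrite /wt.
have := @split_pre _ _ _ X h m setT hpm; rewrite !setIT => ->.
apply: fineP_add; try exact: measurableI.
by have := @split_disj _ _ _ X h m setT; rewrite !setIT.
Qed.

Lemma wlab_split (R : realType) (d : measure_display) (T : measurableType d)
  (P : probability T R) (dim k : nat) (X : T -> 'rV[R]_dim) (Y : T -> 'I_k)
  (h : 'rV[R]_dim -> R) (m : set 'rV[R]_dim) (i : 'I_k) :
  measurable (Y @^-1` [set i]) ->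
  measurable (X @^-1` m) -> measurable (X @^-1` [set x | 0 < h x]) ->
  measurable (X @^-1` [set x | h x < 0]) ->
  (forall x, h x = 1 \/ h x = -1) ->
  wlab P X Y m i = wlab P X Y (m `&` [set x | h x < 0]) i
                   + wlab P X Y (m `&` [set x | 0 < h x]) i.
Proof.
move=> mY mm mp mn hpm; rewrite /wlab.
rewrite (@split_pre _ _ _ X h m _ hpm).
apply: fineP_add; try (apply: measurableI => //; exact: measurableI).
exact: split_disj.
Qed.

Lemma wlab_sum (R : realType) (d : measure_display) (T : measurableType d)
  (P : probability T R) (dim k : nat) (X : T -> 'rV[R]_dim) (Y : T -> 'I_k)
  (m : set 'rV[R]_dim) :
  (forall i : 'I_k, measurable (Y @^-1` [set i])) ->
  measurable (X @^-1` m) ->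
  \sum_(i < k) wlab P X Y m i = wt P X m.
Proof.
move=> mY mm; rewrite /wlab /wt sum_fine; last first.
  by move=> i _; apply: fin_num_measure; exact: measurableI.
congr fine.
rewrite -measure_semi_additive_ord.
- congr (P _); apply/seteqP; split => x.
    by elim/big_ind: _ => //= [A B HA HB [/HA|/HB]|i _ []].
  move=> Ax; rewrite (bigD1 (Y x)) //=; left; split => //.
- by move=> i; exact: measurableI.
- apply/trivIsetP => i j _ _ ij; apply/seteqP; split => x //= [[_ /= ->] [_ /= E]].
  by move: ij; rewrite E eqxx.
- by apply: bigsetU_measurable => i _; exact: measurableI.
Qed.
Lemma CS_sum (R : realFieldType) (k : nat) (u : 'I_k -> R) : (0 < k)%N ->
  (\sum_(i < k) u i) ^+ 2 <= k%:R * \sum_(i < k) u i ^+ 2.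
Proof.
move=> k0; set S := \sum_(i < k) u i.
have E : \sum_(i < k) (k%:R * u i - S) ^+ 2 = k%:R * (k%:R * \sum_(i < k) u i ^+ 2 - S ^+ 2).
  have Ei i : (k%:R * u i - S) ^+ 2 =
     k%:R ^+ 2 * u i ^+ 2 + (- (2 * k%:R * S)) * u i + S ^+ 2 by ring.
  rewrite (eq_bigr _ (fun i _ => Ei i)).
  rewrite !big_split /= -!mulr_sumr sumr_const card_ord -/S -mulr_natl; ring.
have : 0 <= \sum_(i < k) (k%:R * u i - S) ^+ 2 by apply: sumr_ge0 => i _; exact: sqr_ge0.
rewrite E pmulr_rge0 ?ltr0n // subr_ge0 //.
Qed.

Lemma step_i (R : realFieldType) (a b w wR : R) :
  0 <= a -> 0 < wR -> wR < w ->
  4 * w * ((a / w) * `|b / a - wR / w|) ^+ 2 <=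
  w * ((a / w) * (1 - a / w)) - wR * ((b / wR) * (1 - b / wR))
  - (w - wR) * (((a - b) / (w - wR)) * (1 - (a - b) / (w - wR))).
Proof.
move=> a0 wR0 wRw.
have w0 : 0 < w by apply: lt_trans wRw.
have wL0 : 0 < w - wR by rewrite subr_gt0.
have [->|an0] := eqVneq a 0.
  rewrite !mul0r expr0n /= mulr0.
  have -> : w * 0 - wR * (b / wR * (1 - b / wR)) -
     (w - wR) * ((0 - b) / (w - wR) * (1 - (0 - b) / (w - wR)))
     = b ^+ 2 / wR + b ^+ 2 / (w - wR).
    field; apply/andP; split; apply/lt0r_neq0 => //.
  by apply: addr_ge0; apply: divr_ge0; rewrite ?sqr_ge0 // ltW.
have a0' : 0 < a by rewrite lt_def an0.
rewrite exprMn real_normK ?num_real //.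
rewrite -subr_ge0.
set D := b * w - a * wR.
have -> : w * (a / w * (1 - a / w)) - wR * (b / wR * (1 - b / wR)) -
  (w - wR) * ((a - b) / (w - wR) * (1 - (a - b) / (w - wR))) -
  4 * w * ((a / w) ^+ 2 * (b / a - wR / w) ^+ 2)
  = D ^+ 2 * (w - 2 * wR) ^+ 2 / (w ^+ 3 * wR * (w - wR)).
  rewrite /D; field.
  by rewrite !lt0r_neq0.
apply: divr_ge0; first by apply: mulr_ge0; exact: sqr_ge0.
by apply: ltW; rewrite !mulr_gt0 // exprn_gt0.
Qed.

Lemma leaf_bound (R : realFieldType) (k : nat) (a : 'I_k -> R) (w : R) :
  (0 < k)%N -> 0 <= w -> \sum_(i < k) a i = w ->
  w * \sum_(i < k) (a i / w) * (1 - a i / w) <= w * (1 - k%:R^-1).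
Proof.
move=> k0 w0 Sa.
have [->|wn0] := eqVneq w 0; first by rewrite !mul0r.
have wp : 0 < w by rewrite lt_def wn0.
have E i : w * ((a i / w) * (1 - a i / w)) = a i - a i ^+ 2 / w.
  by field; rewrite lt0r_neq0.
rewrite mulr_sumr (eq_bigr _ (fun i _ => E i)) sumrB Sa -mulr_suml.
have := @CS_sum _ _ a k0; rewrite Sa => H.
rewrite -subr_ge0.
have kp : 0 < k%:R :> R by rewrite ltr0n.
have -> : w * (1 - k%:R^-1) - (w - (\sum_(i < k) a i ^+ 2) / w)
   = (k%:R * (\sum_(i < k) a i ^+ 2) - w ^+ 2) / (k%:R * w).
  by field; rewrite !lt0r_neq0.
by apply: divr_ge0; [rewrite subr_ge0 | apply: ltW; apply: mulr_gt0].
Qed.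

Definition fl (R : realType) (d : measure_display) (T : measurableType d)
  (P : probability T R) (dim k : nat) (X : T -> 'rV[R]_dim) (Y : T -> 'I_k)
  (l : set 'rV[R]_dim) : R :=
  wt P X l * \sum_(i < k) pi_ P X Y l i * (1 - pi_ P X Y l i).

Lemma fl_bound (R : realType) (d : measure_display) (T : measurableType d)
  (P : probability T R) (dim k : nat) (X : T -> 'rV[R]_dim) (Y : T -> 'I_k)
  (l : set 'rV[R]_dim) : (0 < k)%N ->
  (forall i : 'I_k, measurable (Y @^-1` [set i])) ->
  measurable (X @^-1` l) ->
  fl P X Y l <= wt P X l * (1 - k%:R^-1).
Proof.
move=> k0 mY ml; apply: leaf_bound => //; first exact: fine_ge0.
exact: wlab_sum.
Qed.

Lemma fl_step (R : realType) (d : measure_display) (T : measurableType d)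
  (P : probability T R) (dim k : nat) (X : T -> 'rV[R]_dim) (Y : T -> 'I_k)
  (h : 'rV[R]_dim -> R) (m : set 'rV[R]_dim) (gamma : R) : (0 < k)%N ->
  (forall i : 'I_k, measurable (Y @^-1` [set i])) ->
  measurable (X @^-1` m) -> measurable (X @^-1` [set x | 0 < h x]) ->
  measurable (X @^-1` [set x | h x < 0]) ->
  (forall x, h x = 1 \/ h x = -1) -> 0 < gamma ->
  WHA P X Y gamma h m ->
  4 * wt P X m * (gamma ^+ 2 / k%:R) <=
  fl P X Y m - fl P X Y (m `&` [set x | h x < 0]) - fl P X Y (m `&` [set x | 0 < h x]).
Proof.
move=> k0 mY mm mp mn hpm g0 [W1 W2].
have wtL := wt_split P mm mp mn hpm.
have wlL := fun i => @wlab_split _ _ _ P _ _ X Y h m i (mY i) mm mp mn hpm.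
rewrite /fl /pi_.
set w := wt P X m in wtL W1 W2 *.
set wR := wt P X (m `&` [set x | 0 < h x]) in wtL W1 W2 *.
have -> : wt P X (m `&` [set x | h x < 0]) = w - wR by rewrite wtL addrK.
have w0 : 0 <= w by exact: fine_ge0.
have wR0 : 0 <= wR by exact: fine_ge0.
have beta_E : beta_ P X h m = wR / w by [].
rewrite beta_E in W1 W2.
have [g1 g2] : gamma <= wR / w /\ gamma <= 1 - wR / w.
  by move: W1; rewrite le_min => /andP[].
have wp : 0 < w.
  rewrite lt_def w0 andbT; apply/eqP => w00; move: g1; rewrite w00 invr0 mulr0.
  by move=> /(lt_le_trans g0); rewrite ltxx.
have wRp : 0 < wR.
  have := lt_le_trans g0 g1; rewrite pmulr_lgt0 //; by rewrite invr_gt0.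
have wRw : wR < w.
  have := lt_le_trans g0 g2; rewrite subr_gt0 ltr_pdivrMr // mul1r //.
have wlL' : forall i, wlab P X Y (m `&` [set x | h x < 0]) i =
     wlab P X Y m i - wlab P X Y (m `&` [set x | 0 < h x]) i.
  by move=> i; rewrite (wlL i) addrK.
set wl := wlab P X Y (m `&` [set x | h x < 0]).
have sE : \sum_(i < k) wl i / (w - wR) * (1 - wl i / (w - wR)) =
  \sum_(i < k) (wlab P X Y m i - wlab P X Y (m `&` [set x | 0 < h x]) i) / (w - wR) *
     (1 - (wlab P X Y m i - wlab P X Y (m `&` [set x | 0 < h x]) i) / (w - wR)).
  by apply: eq_bigr => i _; rewrite /wl wlL'.
rewrite sE.
rewrite -/w !mulr_sumr -!sumrB.
set u := fun i : 'I_k => (wlab P X Y m i / w) *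
   `|wlab P X Y (m `&` [set x | 0 < h x]) i / wlab P X Y m i - wR / w|.
apply: (@le_trans _ _ (\sum_(i < k) 4 * w * u i ^+ 2)); last first.
  apply: ler_sum => i _; rewrite addrAC /u; apply: step_i => //; exact: fine_ge0.
rewrite -mulr_sumr ler_wpM2l //; first by apply: mulr_ge0 => //; lra.
have W2' : gamma <= \sum_(i < k) u i by [].
have kp : 0 < k%:R :> R by rewrite ltr0n.
rewrite ler_pdivrMr // mulrC.
apply: le_trans (@CS_sum _ _ u k0).
rewrite expr2 expr2; apply: ler_pM => //; exact: ltW.
Qed.
Lemma ln_step (R : realType) (n : R) : 0 < n -> ln (n + 1) - ln n <= n^-1.
Proof.
move=> n0.
have -> : ln (n + 1) - ln n = ln ((n + 1) / n).
  by rewrite ln_div // posrE // addr_gt0.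
have -> : (n + 1) / n = 1 + n^-1 by field; rewrite lt0r_neq0.
apply: le_ln1Dx; apply: lt_le_trans (_ : 0 <= n^-1); first by rewrite ltrN10.
by rewrite invr_ge0 ltW.
Qed.

Lemma rec_step (R : realType) (G G' w n kk g : R) :
  1 <= n -> 2 <= kk -> 0 < g -> 2 * g <= 1 -> 0 <= w ->
  G <= n * w * (1 - kk^-1) ->
  G' <= G - 4 * w * (g ^+ 2 / kk) ->
  G <= (1 - kk^-1) * expR (- (4 * g ^+ 2 / (kk - 1)) * ln n) ->
  G' <= (1 - kk^-1) * expR (- (4 * g ^+ 2 / (kk - 1)) * ln (n + 1)).
Proof.
move=> n1 k2 g0 g12 w0 HGw HG' HG.
set c := 4 * g ^+ 2 / (kk - 1).
have n0 : 0 < n by lra.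
have k1 : 0 < kk - 1 by lra.
have c0 : 0 <= c by apply: divr_ge0; [apply: mulr_ge0; [lra | exact: sqr_ge0] | lra].
have c1 : c <= 1.
  rewrite /c ler_pdivrMr // mul1r; nra.
have cn : c / n <= 1.
  rewrite ler_pdivrMr // mul1r; lra.
have step1 : G' <= G * (1 - c / n).
  apply: (le_trans HG'); rewrite mulrBr mulr1 lerD2l lerN2.
  have -> : 4 * w * (g ^+ 2 / kk) = c / n * (n * w * (1 - kk^-1)).
    rewrite /c; field; rewrite !lt0r_neq0 //; lra.
  rewrite mulrC ler_wpM2l //; by rewrite divr_ge0 // ltW.
apply: (le_trans step1).
apply: le_trans (_ : (1 - kk^-1) * expR (- c * ln n) * (1 - c / n) <= _).
  by rewrite ler_wpM2r // subr_ge0.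
rewrite -mulrA ler_wpM2l //.
  rewrite subr_ge0 invf_le1; lra.
have -> : - c * ln (n + 1) = - c * ln n + (- c * (ln (n + 1) - ln n)) by ring.
have eg : 0 <= expR (- c * ln n) by apply: ltW; apply: expR_gt0.
rewrite expRD ler_wpM2l //.
apply: le_trans (expR_ge1Dx _).
have H := @ln_step _ n n0.
rewrite lerD2l mulNr lerN2.
by rewrite ler_wpM2l.
Qed.

Lemma ln2_ge (R : realType) : 2^-1 <= ln (2 : R).
Proof.
rewrite -ler_expR lnK ?posrE //.
have h1 := expR_ge1Dx (- 2^-1 : R).
have h2 : expR (2^-1 : R) * expR (- 2^-1) = 1 by rewrite -expRD subrr expR0.
have e0 := expR_gt0 (2^-1 : R).
have e1 := expR_gt0 (- 2^-1 : R).
nra.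
Qed.

Lemma final_bound (R : realType) (G tt kk g alpha : R) :
  0 <= tt -> 2 <= kk -> 0 < g -> 2 * g <= 1 -> 0 < alpha ->
  alpha <= 2 * (1 - kk^-1) ->
  (2 * (1 - kk^-1) / alpha)
    `^ ((2 * (1 - g) ^+ 2) / (g ^+ 2 * (ln (expR 1) / ln 2)) * (kk - 1)) <= tt ->
  G <= (1 - kk^-1) * expR (- (4 * g ^+ 2 / (kk - 1)) * ln (tt + 1)) ->
  G <= alpha.
Proof.
move=> t0 k2 g0 g12 a0 aB HP HG.
set B := 2 * (1 - kk^-1) / alpha in HP.
set E := (2 * (1 - g) ^+ 2) / (g ^+ 2 * (ln (expR 1) / ln 2)) * (kk - 1) in HP.
set c := 4 * g ^+ 2 / (kk - 1) in HG.
have kinv : kk^-1 <= 2^-1 by rewrite lef_pV2 ?posrE //; lra.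
have K1 : 0 < 1 - kk^-1 by lra.
have B1 : 1 <= B by rewrite /B ler_pdivlMr // mul1r.
have B0 : 0 < B by lra.
have lnB0 : 0 <= ln B by exact: ln_ge0.
have HP' : expR (E * ln B) <= tt.
  by move: HP; rewrite /powR gt_eqF.
have tp : 0 < tt by apply: lt_le_trans HP'; exact: expR_gt0.
have ElnB : E * ln B <= ln (tt + 1).
  rewrite -[E * ln B]expRK ler_ln ?posrE ?expR_gt0 ?addr_gt0 //; lra.
have ln2 := ln2_ge R.
have ln2p : 0 < ln (2 : R) by lra.
have k1 : 0 < kk - 1 by lra.
have cE : 1 <= c * E.
  have -> : c * E = 8 * (1 - g) ^+ 2 * ln 2.
    rewrite /c /E expRK; field.
    by rewrite !lt0r_neq0.
  nra.
have c0 : 0 <= c by apply: divr_ge0; [apply: mulr_ge0; [lra | exact: sqr_ge0] | lra].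
have Hc : ln B <= c * ln (tt + 1).
  apply: le_trans (_ : c * (E * ln B) <= _); last by rewrite ler_wpM2l.
  rewrite mulrA; nra.
have : expR (- c * ln (tt + 1)) <= B^-1.
  by rewrite -[B^-1]lnK ?posrE ?invr_gt0 // ler_expR lnV ?posrE // mulNr lerN2.
move=> H; apply: (le_trans HG).
apply: le_trans (_ : (1 - kk^-1) * B^-1 <= _); first by rewrite ler_wpM2l // ltW.
rewrite /B invf_div mulrA (mulrC _ alpha) -mulrA.
have -> : (1 - kk^-1) / (2 * (1 - kk^-1)) = 2^-1.
  by field; rewrite !lt0r_neq0 //; lra.
lra.
Qed.

Lemma leaves_inv (R : realType) (d : measure_display) (T : measurableType d)
  (dim : nat) (X : T -> 'rV[R]_dim)
  (hs : nat -> 'rV[R]_dim -> R) (js : nat -> nat) (t : nat) :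
  (forall s, (s < t)%N -> measurable (X @^-1` [set x | 0 < hs s x])) ->
  (forall s, (s < t)%N -> measurable (X @^-1` [set x | hs s x < 0])) ->
  (forall s, (s < t)%N -> (js s < size (leaves hs js s))%N) ->
  forall s, (s <= t)%N -> size (leaves hs js s) = s.+1 /\
    all (fun l => `[< measurable (X @^-1` l) >]) (leaves hs js s).
Proof.
move=> mp mn hj; elim => [|s IH] Hs.
  split => //=; rewrite andbT; apply/asboolP; rewrite preimage_setT; exact: measurableT.
have Hs' : (s < t)%N by [].
have [sz al] := IH (ltnW Hs).
have jlt := hj s Hs'.
rewrite [leaves _ _ s.+1]/=.
set L := leaves hs js s in sz al jlt *.
set j := js s in jlt *.
split.
  rewrite size_cat /= size_take jlt size_drop sz.
  rewrite sz in jlt; lia.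
move: al; rewrite -{1}(cat_take_drop j L) (drop_nth set0 jlt) seq.all_cat /=.
move=> /and3P[a1 /asboolP a2 a3].
rewrite seq.all_cat a1 /= a3 /= andbT; apply/andP; split; apply/asboolP.
  exact: measurableI (mn s Hs').
exact: measurableI (mp s Hs').
Qed.

Lemma gini_split (R : realType) (d : measure_display) (T : measurableType d)
  (P : probability T R) (dim k : nat) (X : T -> 'rV[R]_dim) (Y : T -> 'I_k)
  (h : 'rV[R]_dim -> R) (L : seq (set 'rV[R]_dim)) (j : nat) :
  (j < size L)%N ->
  gini P X Y (take j L ++ split_leaf h (nth set0 L j) ++ drop j.+1 L) =
  gini P X Y L - fl P X Y (nth set0 L j)
  + fl P X Y (nth set0 L j `&` [set x | h x < 0])
  + fl P X Y (nth set0 L j `&` [set x | 0 < h x]).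
Proof.
move=> jlt; rewrite /gini; set m := nth set0 L j.
have EL : L = take j L ++ m :: drop j.+1 L.
  by rewrite -(drop_nth set0 jlt) cat_take_drop.
have SL : \sum_(l <- L) fl P X Y l = \sum_(l <- take j L) fl P X Y l +
   (fl P X Y m + \sum_(l <- drop j.+1 L) fl P X Y l).
  by rewrite {1}EL big_cat big_cons.
rewrite [\sum_(l <- L) _]SL !big_cat !big_cons big_nil /=.
rewrite -/(fl P X Y _) -/(fl P X Y _) addr0; ring.
Qed.

Lemma gini_bound (R : realType) (d : measure_display) (T : measurableType d)
  (P : probability T R) (dim k : nat) (X : T -> 'rV[R]_dim) (Y : T -> 'I_k)
  (L : seq (set 'rV[R]_dim)) (w : R) : (0 < k)%N ->
  (forall i : 'I_k, measurable (Y @^-1` [set i])) ->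
  all (fun l => `[< measurable (X @^-1` l) >]) L ->
  (forall j, (j < size L)%N -> wt P X (nth set0 L j) <= w) ->
  gini P X Y L <= (size L)%:R * w * (1 - k%:R^-1).
Proof.
move=> k0 mY /all_nthP al hw.
have K : 0 <= 1 - k%:R^-1 :> R.
  by rewrite subr_ge0 invf_le1 ?ler1n ?ltr0n.
rewrite /gini (big_nth set0) big_mkord.
apply: le_trans (_ : \sum_(i < size L) w * (1 - k%:R^-1) <= _); last first.
  by rewrite sumr_const card_ord -mulrA mulr_natl.
apply: ler_sum => i _.
have mi : measurable (X @^-1` nth set0 L i) by apply/asboolP; apply: al.
apply: le_trans (@fl_bound _ _ _ P _ _ X Y _ k0 mY mi) _.
by rewrite ler_wpM2r // hw.
Qed.

Unset Implicit Arguments.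

Theorem theorem2 (R : realType) (d : measure_display) (T : measurableType d)
  (P : probability T R) (dim k : nat) (X : T -> 'rV[R]_dim) (Y : T -> 'I_k)
  (hs : nat -> 'rV[R]_dim -> R) (js : nat -> nat) (gamma alpha : R) (t : nat) :
  (2 <= k)%N ->
  (forall i : 'I_k, measurable (Y @^-1` [set i])) ->
  0 < gamma ->
  (* every split hypothesis is {-1,1}-valued with measurable decision sets *)
  (forall s, (s < t)%N -> forall x, hs s x = 1 \/ hs s x = -1) ->
  (forall s, (s < t)%N -> measurable (X @^-1` [set x | 0 < hs s x])) ->
  (forall s, (s < t)%N -> measurable (X @^-1` [set x | hs s x < 0])) ->
  (* at each step the split leaf is a leaf of largest weight *)
  (forall s, (s < t)%N ->
     (js s < size (leaves hs js s))%N /\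
     forall j, (j < size (leaves hs js s))%N ->
       wt P X (nth set0 (leaves hs js s) j)
       <= wt P X (nth set0 (leaves hs js s) (js s))) ->
  (* Weak Hypothesis Assumption at every split node *)
  (forall s, (s < t)%N ->
     WHA P X Y gamma (hs s) (nth set0 (leaves hs js s) (js s))) ->
  0 < alpha -> alpha <= 2 * (1 - k%:R^-1) ->
  ((2 * (1 - k%:R^-1)) / alpha)
    `^ ((2 * (1 - gamma) ^+ 2) / (gamma ^+ 2 * (ln (expR 1) / ln 2)) * (k%:R - 1))
    <= t%:R ->
  gini P X Y (leaves hs js t) <= alpha.
Proof.
move=> k2 mY g0 hpm mp mn hmax hwha a0 aB HP.
have k0 : (0 < k)%N by apply: leq_trans k2.
have kk2 : 2 <= k%:R :> R by rewrite (ler_nat _ 2).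
have kinv : k%:R^-1 <= 2^-1 :> R by rewrite lef_pV2 ?posrE //; lra.
have hj : forall s, (s < t)%N -> (js s < size (leaves hs js s))%N.
  by move=> s /hmax [].
have inv := @leaves_inv _ _ _ _ X hs js t mp mn hj.
have tpos : (0 < t)%N.
  rewrite lt0n; apply/eqP => t0; move: HP; rewrite t0 => HP.
  have : 0 < (2 * (1 - k%:R^-1)) / alpha.
    by apply: divr_gt0 => //; lra.
  move=> /powR_gt0 H; have := lt_le_trans (H ((2 * (1 - gamma) ^+ 2) /
     (gamma ^+ 2 * (ln (expR 1) / ln 2)) * (k%:R - 1))) HP.
  by rewrite ltxx.
have g12 : 2 * gamma <= 1.
  have [W1 _] := hwha 0%N tpos.
  move: W1; rewrite le_min => /andP[A B]; lra.
have claim : forall s, (s <= t)%N -> gini P X Y (leaves hs js s) <=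
   (1 - k%:R^-1) * expR (- (4 * gamma ^+ 2 / (k%:R - 1)) * ln (s.+1)%:R).
  elim => [|s IH] Hs.
    rewrite /= ln1 mulr0 expR0 mulr1 /gini big_cons big_nil addr0 -/(fl P X Y _).
    have mT : measurable (X @^-1` (@setT 'rV[R]_dim)).
      by rewrite preimage_setT; exact: measurableT.
    apply: le_trans (@fl_bound _ _ _ P _ _ X Y _ k0 mY mT) _.
    have -> : wt P X setT = 1 by rewrite /wt preimage_setT probability_setT.
    by rewrite mul1r.
  have Hs' : (s < t)%N by [].
  have [sz al] := inv s (ltnW Hs).
  have [jlt hmx] := hmax s Hs'.
  have mm : measurable (X @^-1` nth set0 (leaves hs js s) (js s)).
    by move/all_nthP: al => al; apply/asboolP; apply: al.
  have Hstep := @fl_step _ _ _ P _ _ X Y _ _ gamma k0 mY mm (mp s Hs') (mn s Hs') (hpm s Hs') g0 (hwha s Hs').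
  have HGw := @gini_bound _ _ _ P _ _ X Y _ _ k0 mY al hmx.
  rewrite sz in HGw.
  have Hsplit := @gini_split _ _ _ P _ _ X Y (hs s) _ _ jlt.
  have LS : leaves hs js s.+1 = take (js s) (leaves hs js s) ++
     split_leaf (hs s) (nth set0 (leaves hs js s) (js s)) ++
     drop (js s).+1 (leaves hs js s) by [].
  rewrite LS Hsplit (_ : s.+2%:R = s.+1%:R + 1 :> R); last by rewrite natr1.
  apply: (rec_step (G := gini P X Y (leaves hs js s))
                   (w := wt P X (nth set0 (leaves hs js s) (js s)))) => //.
  - by rewrite ler1n.
  - exact: fine_ge0.
  - lra.
  - exact: IH (ltnW Hs).
apply: (@final_bound R _ t%:R k%:R gamma alpha) => //.
by rewrite (GRing.natr1 R t); exact: claim.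
Qed.
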